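(* For $n\in\{0,1,2,\dots\}$ define \[ b_n=\frac14\frac{(-1)^n}{n!}\sum_{k=0}^{n}(-1)^kS(n,k)(2k-1)!!, \] \[ c_n=\frac{(-1)^{n+1}}{n!}\sum_{k=1}^{n}(-1)^kS(n,k)\frac{k!}{2^k}\sum_{\ell=1}^{k}(-1)^{\ell}\binom{2k-\ell}{k}\frac{2^{\ell/2}}{\ell}\sin\frac{3\ell\pi}{4}. \] Then $\lim_{n\to\infty}b_n=+\infty$, $\lim_{n\to\infty}\frac{c_n}{b_n}=\pi$, and consequently $\lim_{n\to\infty}c_n=+\infty$.
   Context: $S(n,k)$ are the Stirling numbers of the second kind, given by $\frac{(e^x-1)^k}{k!}=\sum_{n\ge k}S(n,k)\frac{x^n}{n!}$. $(2k-1)!!=1\cdot3\cdots(2k-1)$ for $k\ge1$, and $(-1)!!=1$. These $b_n,c_n$ satisfy $W(z)=\sum_n(b_n\pi-c_n)z^n$ for $|z|<\ln2$, where $W(z)=\frac{\arctan\sqrt{2e^{-z}-1}}{\sqrt{2e^{-z}-1}}$ with principal branches. *)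

(* Defs.v *)
From Stdlib Require Import Reals Factorial Arith.
From Coquelicot Require Import Coquelicot.
Open Scope R_scope.

Fixpoint stirling2 (n k : nat) : nat :=
  match n, k with
  | O, O => 1%nat
  | O, S _ => 0%nat
  | S _, O => 0%nat
  | S n', S k' => ((S k') * stirling2 n' (S k') + stirling2 n' k')%nat
  end.

(* odd_dfact k = (2k-1)!! = 1*3*...*(2k-1), with odd_dfact 0 = (-1)!! = 1. *)
Fixpoint odd_dfact (k : nat) : nat :=
  match k with
  | O => 1%nat
  | S k' => ((2 * k' + 1) * odd_dfact k')%nat
  end.

Definition b_seq (n : nat) : R :=
  / 4 * ((-1) ^ n / INR (fact n)) *
  sum_n_m (fun k => (-1) ^ k * INR (stirling2 n k) * INR (odd_dfact k)) 0 n.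

Definition c_seq (n : nat) : R :=
  (-1) ^ (S n) / INR (fact n) *
  sum_n_m (fun k =>
    (-1) ^ k * INR (stirling2 n k) * (INR (fact k) / 2 ^ k) *
    sum_n_m (fun l =>
      (-1) ^ l * Binomial.C (2 * k - l) k * Rpower 2 (INR l / 2) / INR l
        * sin (3 * INR l * PI / 4)) 1 k) 1 n.

(* Main.v *)
Require Import Defs.
From Stdlib Require Import Reals Lra Lia Factorial Arith FunctionalExtensionality ZArith.
From Coquelicot Require Import Coquelicot.
Open Scope R_scope.


Lemma sumR_Sn_m (a : nat -> R) n m : (n <= m)%nat -> @eq R (sum_n_m a n m) (a n + sum_n_m a (S n) m).
Proof. intros H. rewrite sum_Sn_m; auto. Qed.
Lemma sumR_n_Sm (a : nat -> R) n m : (n <= S m)%nat -> @eq R (sum_n_m a n (S m)) (sum_n_m a n m + a (S m)).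
Proof. intros H. rewrite sum_n_Sm; auto. Qed.
Lemma sumR_zero (a : nat -> R) n m : (m < n)%nat -> @eq R (sum_n_m a n m) 0.
Proof. intros H. rewrite sum_n_m_zero; auto. Qed.
Lemma sumR_nn (a : nat -> R) n : @eq R (sum_n_m a n n) (a n).
Proof. apply sum_n_n. Qed.
Lemma sumR_plus (a b : nat -> R) n m : @eq R (sum_n_m (fun k => a k + b k) n m) (sum_n_m a n m + sum_n_m b n m).
Proof. apply (sum_n_m_plus a b). Qed.
Lemma sumR_scal (c : R) (a : nat -> R) n m : @eq R (sum_n_m (fun k => c * a k) n m) (c * sum_n_m a n m).
Proof. apply (sum_n_m_mult_l c a). Qed.
Lemma sumR_scal_r (c : R) (a : nat -> R) n m : @eq R (sum_n_m (fun k => a k * c) n m) (sum_n_m a n m * c).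
Proof. apply (sum_n_m_mult_r c a). Qed.
Lemma sumR_ext (a b : nat -> R) n m : (forall k, (n <= k <= m)%nat -> a k = b k) -> @eq R (sum_n_m a n m) (sum_n_m b n m).
Proof. apply sum_n_m_ext_loc. Qed.
Lemma sumR_opp (a : nat -> R) n m : @eq R (sum_n_m (fun k => - a k) n m) (- sum_n_m a n m).
Proof. transitivity (sum_n_m (fun k => (-1) * a k) n m). apply sumR_ext; intros; ring. rewrite sumR_scal; ring. Qed.
Lemma sumR_minus (a b : nat -> R) n m : @eq R (sum_n_m (fun k => a k - b k) n m) (sum_n_m a n m - sum_n_m b n m).
Proof. unfold Rminus. rewrite sumR_plus, sumR_opp. ring. Qed.
Lemma sumR_le (a b : nat -> R) n m : (forall k, (n <= k <= m)%nat -> a k <= b k) -> sum_n_m a n m <= sum_n_m b n m.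
Proof.
  intros H. destruct (le_lt_dec n m) as [Hl|Hl].
  - induction m. 
    + assert (n = 0)%nat by lia. subst. rewrite !sumR_nn. apply H; lia.
    + destruct (Nat.eq_dec n (S m)). subst. rewrite !sumR_nn. apply H; lia.
      rewrite !sumR_n_Sm by lia. apply Rplus_le_compat. apply IHm; [intros; apply H; lia | lia]. apply H; lia.
  - rewrite !sumR_zero by lia. lra.
Qed.
Lemma sumR_shift (a : nat -> R) n m : @eq R (sum_n_m (fun l => a (S l)) n m) (sum_n_m a (S n) (S m)).
Proof. apply (sum_n_m_S a). Qed.
Lemma sumR_chasles (a : nat -> R) n m k : (n <= S m)%nat -> (m <= k)%nat ->
  @eq R (sum_n_m a n k) (sum_n_m a n m + sum_n_m a (S m) k).
Proof. intros. rewrite (sum_n_m_Chasles a n m k); auto. Qed.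
Lemma sumR_telescope (g : nat -> R) n m : (n <= S m)%nat ->
  @eq R (sum_n_m (fun l => g (S l) - g l) n m) (g (S m) - g n).
Proof.
  intros H. induction m.
  - destruct (Nat.eq_dec n 0). subst. rewrite sumR_nn. ring.
    assert (n = 1)%nat by lia. subst. rewrite sumR_zero by lia. ring.
  - destruct (Nat.eq_dec n (S (S m))). subst. rewrite sumR_zero by lia. ring.
    rewrite sumR_n_Sm by lia. rewrite IHm by lia. ring.
Qed.
Lemma sumR_nonneg (a : nat -> R) n m : (forall k, (n <= k <= m)%nat -> 0 <= a k) -> 0 <= sum_n_m a n m.
Proof.
  intros H. assert (sum_n_m (fun _ => 0) n m <= sum_n_m a n m) by (apply sumR_le; auto).
  rewrite sum_n_m_const in H0. rewrite Rmult_0_r in H0. exact H0.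
Qed.
Lemma sumR_abs (a : nat -> R) n m : Rabs (sum_n_m a n m) <= sum_n_m (fun k => Rabs (a k)) n m.
Proof.
  destruct (le_lt_dec n m) as [Hl|Hl].
  - induction m.
    + assert (n = 0)%nat by lia. subst. rewrite !sumR_nn. lra.
    + destruct (Nat.eq_dec n (S m)). subst. rewrite !sumR_nn. lra.
      rewrite !sumR_n_Sm by lia. eapply Rle_trans. apply Rabs_triang.
      apply Rplus_le_compat. apply IHm; lia. lra.
  - rewrite !sumR_zero by lia. rewrite Rabs_R0. lra.
Qed.
Lemma sumR_const_le (a : nat -> R) c n m : (forall k, (n <= k <= m)%nat -> a k <= c) ->
  sum_n_m a n m <= INR (S m - n) * c.
Proof. intros H. rewrite <- sum_n_m_const. apply sumR_le. auto. Qed.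


Fixpoint cb (n k : nat) : nat :=
  match k with
  | O => 1%nat
  | S k' => match n with O => 0%nat | S n' => (cb n' k' + cb n' (S k'))%nat end
  end.

Lemma cb_gt n k : (n < k)%nat -> cb n k = 0%nat.
Proof.
  revert k; induction n; intros k H; destruct k; simpl; try lia; auto.
  rewrite !IHn by lia. auto.
Qed.
Lemma cb_nn n : cb n n = 1%nat.
Proof. induction n; simpl; auto. rewrite IHn, cb_gt by lia. auto. Qed.
Lemma cb_n0 n : cb n 0 = 1%nat.
Proof. destruct n; auto. Qed.
Lemma C_cb n k : (k <= n)%nat -> Binomial.C n k = INR (cb n k).
Proof.
  revert k; induction n; intros k H.
  - assert (k = 0)%nat by lia. subst. rewrite C_n_0. simpl. auto.
  - destruct k. rewrite C_n_0, cb_n0. simpl; auto.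
    destruct (Nat.eq_dec k n). subst. rewrite C_n_n, cb_nn. auto.
    rewrite <- pascal by lia. simpl cb. rewrite plus_INR. rewrite !IHn by lia. auto.
Qed.
Lemma cb_sym a b : cb (a + b) a = cb (a + b) b.
Proof.
  apply INR_eq. rewrite <- !C_cb by lia. rewrite pascal_step1 by lia. f_equal. lia.
Qed.

(* real/imag parts of (1-i)^l *)
Fixpoint csq (l : nat) : R * R :=
  match l with
  | O => (1, 0)
  | S l' => let p := csq l' in (fst p + snd p, snd p - fst p)
  end.
Definition cl l := fst (csq l).
Definition sl l := snd (csq l).
Lemma cl_S l : cl (S l) = cl l + sl l. Proof. reflexivity. Qed.
Lemma sl_S l : sl (S l) = sl l - cl l. Proof. reflexivity. Qed.
Lemma cl_1 : cl 1 = 1. Proof. unfold cl; simpl; ring. Qed.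
Lemma sl_1 : sl 1 = -1. Proof. unfold sl; simpl; ring. Qed.

Definition Ae (e : nat -> R) (n m : nat) : R :=
  sum_n_m (fun l => INR (cb (n - l) m) * e l) 1 n.

Lemma Ae_R1 e n m : Ae e (S n) m = INR (cb n m) * e 1%nat + Ae (fun l => e (S l)) n m.
Proof.
  unfold Ae. rewrite sumR_Sn_m by lia. f_equal.
  - replace (S n - 1)%nat with n by lia. auto.
  - rewrite <- sumR_shift. apply sumR_ext. intros k Hk. simpl. auto.
Qed.

Lemma Ae_R3 e n m :
  Ae (fun l => e (S l)) n (S m) - Ae e n (S m) - Ae e n m = - INR (cb n (S m)) * e 1%nat.
Proof.
  unfold Ae. rewrite <- !sumR_minus.
  set (g := fun l => INR (cb (S n - l) (S m)) * e l).
  rewrite (sumR_ext _ (fun l => g (S l) - g l)).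
  - rewrite sumR_telescope by lia. unfold g. replace (S n - S n)%nat with 0%nat by lia.
    replace (S n - 1)%nat with n by lia. simpl cb. simpl. ring.
  - intros k Hk. unfold g. replace (S n - S k)%nat with (n - k)%nat by lia.
    replace (S n - k)%nat with (S (n - k)) by lia. simpl cb. rewrite plus_INR. ring.
Qed.

Lemma Ae_plus a b n m : Ae (fun l => a l + b l) n m = Ae a n m + Ae b n m.
Proof. unfold Ae. rewrite <- sumR_plus. apply sumR_ext. intros; ring. Qed.
Lemma Ae_minus a b n m : Ae (fun l => a l - b l) n m = Ae a n m - Ae b n m.
Proof. unfold Ae. rewrite <- sumR_minus. apply sumR_ext. intros; ring. Qed.

Lemma Ac_R1 n m : Ae cl (S n) m = INR (cb n m) + Ae cl n m + Ae sl n m.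
Proof. rewrite Ae_R1, cl_1. rewrite (Ae_plus cl sl). ring. Qed.
Lemma As_R1 n m : Ae sl (S n) m = - INR (cb n m) + Ae sl n m - Ae cl n m.
Proof. rewrite Ae_R1, sl_1. rewrite (Ae_minus sl cl). ring. Qed.
Lemma As_R3 n m : Ae sl n (S m) = Ae cl n m - INR (cb n (S m)).
Proof.
  pose proof (Ae_R3 cl n m) as H. rewrite cl_1 in H.
  change (fun l => cl (S l)) with (fun l => cl l + sl l) in H.
  rewrite Ae_plus in H. lra.
Qed.
Lemma Ac_R3 n m : Ae cl n (S m) = - Ae sl n m - INR (cb n (S m)).
Proof.
  pose proof (Ae_R3 sl n m) as H. rewrite sl_1 in H.
  change (fun l => sl (S l)) with (fun l => sl l - cl l) in H.
  rewrite Ae_minus in H. lra.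
Qed.

Definition Pc m := Ae cl (2 * m + 1) m.
Definition Ps m := Ae sl (2 * m + 1) m.

Lemma cb_mid m : INR (cb (2 * m + 2) (S m)) = 2 * INR (cb (2 * m + 1) m).
Proof.
  replace (2 * m + 2)%nat with (S (2 * m + 1)) by lia.
  change (cb (S (2 * m + 1)) (S m)) with (cb (2 * m + 1) m + cb (2 * m + 1) (S m))%nat.
  rewrite plus_INR. replace (2 * m + 1)%nat with (S m + m)%nat by lia.
  rewrite (cb_sym (S m) m). ring.
Qed.

Lemma P_rec m : Pc (S m) = 2 * Pc m /\ Ps (S m) = 2 * Ps m - INR (cb (2 * m + 2) (S m)).
Proof.
  unfold Pc, Ps.
  replace (2 * S m + 1)%nat with (S (2 * m + 2)) by lia.
  rewrite Ac_R1, As_R1. rewrite Ac_R3, As_R3.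
  replace (2 * m + 2)%nat with (S (2 * m + 1)) by lia.
  rewrite Ac_R1, As_R1. replace (S (2 * m + 1)) with (2 * m + 2)%nat by lia.
  rewrite cb_mid. split; ring.
Qed.

Lemma Pc_val m : Pc m = 2 ^ m.
Proof.
  induction m. unfold Pc, Ae. simpl. rewrite sumR_nn. simpl. rewrite cl_1. ring.
  rewrite (proj1 (P_rec m)), IHm. simpl. ring.
Qed.
Lemma Ps_0 : Ps 0 = -1.
Proof. unfold Ps, Ae. simpl. rewrite sumR_nn. simpl. rewrite sl_1. ring. Qed.


Lemma binom_id K j : (j <= K)%nat ->
  INR (S (S K)) * Binomial.C (S K + j + 2) (S (S K)) - 2 * INR (2 * S K + 1) * Binomial.C (S K + j) (S K)
  = INR (S K - j) * (2 * Binomial.C (S K + j) K - Binomial.C (S K + j + 1) (S K)).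
Proof.
  intros Hj. unfold Binomial.C.
  replace (S K + j + 2 - S (S K))%nat with (S j) by lia.
  replace (S K + j - S K)%nat with j by lia.
  replace (S K + j - K)%nat with (S j) by lia.
  replace (S K + j + 1 - S K)%nat with (S j) by lia.
  replace (S K + j + 2)%nat with (S (S (S K + j))) by lia.
  replace (S K + j + 1)%nat with (S (S K + j)) by lia.
  rewrite (fact_simpl (S (S K + j))), (fact_simpl (S K + j)).
  rewrite (fact_simpl (S K)), (fact_simpl K), (fact_simpl j).
  rewrite minus_INR by lia.
  rewrite !mult_INR.
  pose proof (INR_fact_neq_0 (S K + j)). pose proof (INR_fact_neq_0 K). pose proof (INR_fact_neq_0 j).
  replace (2 * S K + 1)%nat with (S (S (S (2 * K)))) by lia.
  rewrite !S_INR. rewrite plus_INR, mult_INR. rewrite !S_INR. simpl (INR 2).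
  simpl (INR 0). set (F := INR (fact (S K + j))). set (f1 := INR (fact K)). set (f2 := INR (fact j)).
  assert (0 <= INR K) by apply pos_INR. assert (0 <= INR j) by apply pos_INR.
  set (x := INR K) in *. set (y := INR j) in *. field. repeat split; try assumption; lra.
Qed.

Definition Gk k := sum_n_m (fun l => Binomial.C (2 * k - l) k * sl l / INR l) 1 k.

Lemma Gk_0 : Gk 0 = 0.
Proof. unfold Gk. apply sumR_zero. lia. Qed.

Lemma Gk_rec k : INR (S k) * Gk (S k) - 2 * INR (2 * k + 1) * Gk k = - 2 ^ k.
Proof.
  destruct k as [|K].
  - unfold Gk. rewrite sumR_nn. rewrite sumR_zero by lia. simpl.
    rewrite C_n_n, sl_1. field.
  - set (k := S K).
    assert (HL : INR (S k) * Gk (S k) - 2 * INR (2 * k + 1) * Gk k =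
       sum_n_m (fun l => (2 * INR (cb (2 * k - l) K) - INR (cb (2 * k + 1 - l) k)) * sl l) 1 (S k)).
    { unfold Gk. rewrite sumR_n_Sm by lia. rewrite sumR_n_Sm by lia.
      replace (2 * S k - S k)%nat with (S k) by lia. rewrite C_n_n.
      replace (2 * k - S k)%nat with K by (unfold k; lia).
      replace (2 * k + 1 - S k)%nat with k by lia.
      rewrite !cb_nn.
      assert (Hs : sum_n_m (fun l => INR (S k) * (Binomial.C (2 * S k - l) (S k) * sl l / INR l) -
          2 * INR (2 * k + 1) * (Binomial.C (2 * k - l) k * sl l / INR l)) 1 k =
          sum_n_m (fun l => (2 * INR (cb (2 * k - l) K) - INR (cb (2 * k + 1 - l) k)) * sl l) 1 k).
      { apply sumR_ext. intros l Hl.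
        assert (Hl0 : INR l <> 0) by (apply not_0_INR; lia).
        pose proof (binom_id K (k - l) ltac:(unfold k in *; lia)) as HB.
        fold k in HB.
        replace (k + (k - l) + 2)%nat with (2 * S k - l)%nat in HB by lia.
        replace (k + (k - l) + 1)%nat with (2 * k + 1 - l)%nat in HB by lia.
        replace (k + (k - l))%nat with (2 * k - l)%nat in HB by lia.
        replace (k - (k - l))%nat with l in HB by lia.
        rewrite <- (C_cb (2 * k - l) K) by (unfold k in *; lia).
        rewrite <- (C_cb (2 * k + 1 - l) k) by lia.
        transitivity ((INR (S k) * Binomial.C (2 * S k - l) (S k) - 2 * INR (2 * k + 1) * Binomial.C (2 * k - l) k) * sl l / INR l).
        field. exact Hl0. rewrite HB. field. exact Hl0. }
      rewrite sumR_minus, sumR_scal, sumR_scal in Hs.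
      rewrite <- Hs. simpl (INR 1). rewrite (S_INR k). field. pose proof (pos_INR k); lra. }
    rewrite HL.
    assert (H1 : Ae sl (2 * k) K = sum_n_m (fun l => INR (cb (2 * k - l) K) * sl l) 1 (S k)).
    { unfold Ae. rewrite (sumR_chasles _ 1 (S k) (2 * k)) by (unfold k; lia).
      rewrite (sumR_ext _ (fun _ => 0) (S (S k))). rewrite sum_n_m_const. simpl; ring.
      intros l Hl. rewrite cb_gt by (unfold k in *; lia). simpl; ring. }
    assert (H2 : Ae sl (2 * k + 1) k = sum_n_m (fun l => INR (cb (2 * k + 1 - l) k) * sl l) 1 (S k)).
    { unfold Ae. rewrite (sumR_chasles _ 1 (S k) (2 * k + 1)) by (unfold k; lia).
      rewrite (sumR_ext _ (fun _ => 0) (S (S k))). rewrite sum_n_m_const. simpl; ring.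
      intros l Hl. rewrite cb_gt by (unfold k in *; lia). simpl; ring. }
    assert (HR : sum_n_m (fun l => (2 * INR (cb (2 * k - l) K) - INR (cb (2 * k + 1 - l) k)) * sl l) 1 (S k)
       = 2 * Ae sl (2 * k) K - Ae sl (2 * k + 1) k).
    { rewrite H1, H2. rewrite <- sumR_scal, <- sumR_minus. apply sumR_ext; intros; ring. }
    rewrite HR.
    assert (E1 : Ae sl (2 * k) K = - INR (cb (2 * K + 1) K) + Ps K - Pc K).
    { replace (2 * k)%nat with (S (2 * K + 1)) by (unfold k; lia). rewrite As_R1. unfold Ps, Pc. ring. }
    assert (E2 : Ae sl (2 * k + 1) k = Ps (S K)) by (unfold Ps; auto).
    rewrite E1, E2. rewrite (proj2 (P_rec K)), Pc_val, cb_mid. simpl. ring.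
Qed.


Lemma trig_csl l :
  (-1) ^ l * Rpower 2 (INR l / 2) * cos (3 * INR l * PI / 4) = cl l /\
  (-1) ^ l * Rpower 2 (INR l / 2) * sin (3 * INR l * PI / 4) = sl l.
Proof.
  induction l as [|l [IHc IHs]].
  - simpl. replace (0 / 2) with 0 by field. replace (3 * 0 * PI / 4) with 0 by field.
    rewrite Rpower_O by lra. rewrite cos_0, sin_0. unfold cl, sl; simpl. split; ring.
  - rewrite S_INR.
    replace ((INR l + 1) / 2) with (INR l / 2 + / 2) by field.
    replace (3 * (INR l + 1) * PI / 4) with (3 * INR l * PI / 4 + (PI - PI / 4)) by field.
    rewrite Rpower_plus, Rpower_sqrt by lra.
    rewrite sin_plus, cos_plus, sin_PI_x, Rtrigo_facts.cos_pi_minus, sin_PI4, cos_PI4.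
    rewrite cl_S, sl_S. rewrite <- IHc, <- IHs.
    assert (Hs : sqrt 2 <> 0) by (apply Rgt_not_eq, sqrt_lt_R0; lra).
    simpl pow. split; field; exact Hs.
Qed.

Definition beta (k : nat) : R := INR (odd_dfact k) / INR (fact k).
Definition gam (k : nat) : R := Gk k / 2 ^ k.
Definition delta (k : nat) : R := PI / 4 * beta k + gam k.

Lemma beta_0 : beta 0 = 1. Proof. unfold beta; simpl; field. Qed.
Lemma beta_rec k : INR (S k) * beta (S k) = INR (2 * k + 1) * beta k.
Proof.
  unfold beta. simpl odd_dfact. rewrite fact_simpl. rewrite !mult_INR.
  pose proof (INR_fact_neq_0 k). assert (INR (S k) <> 0) by (apply not_0_INR; lia).
  replace (k + (k + 0) + 1)%nat with (2 * k + 1)%nat by lia. field. split; auto.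
Qed.
Lemma beta_pos k : 0 < beta k.
Proof.
  unfold beta. apply Rdiv_lt_0_compat; [|apply lt_0_INR, lt_O_fact].
  apply lt_0_INR. induction k; simpl; lia.
Qed.
Lemma gam_rec k : INR (S k) * gam (S k) = INR (2 * k + 1) * gam k - / 2.
Proof.
  unfold gam. pose proof (Gk_rec k) as H.
  assert (H2 : 2 ^ k <> 0) by (apply pow_nonzero; lra).
  simpl pow. replace (INR (S k) * (Gk (S k) / (2 * 2 ^ k))) with ((INR (S k) * Gk (S k)) / (2 * 2 ^ k)) by (field; auto).
  replace (INR (S k) * Gk (S k)) with (2 * INR (2 * k + 1) * Gk k - 2 ^ k) by lra.
  field. auto.
Qed.
Lemma delta_rec k : INR (S k) * delta (S k) = INR (2 * k + 1) * delta k - / 2.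
Proof.
  unfold delta. rewrite Rmult_plus_distr_l.
  replace (INR (S k) * (PI / 4 * beta (S k))) with (PI / 4 * (INR (S k) * beta (S k))) by ring.
  rewrite beta_rec, gam_rec. ring.
Qed.
Lemma delta_0 : delta 0 = PI / 4.
Proof. unfold delta, gam. rewrite beta_0, Gk_0. simpl; field. Qed.


Definition rho (x : R) : R := 2 * x ^ 2 / (1 + x ^ 2).

Fixpoint Jf (k : nat) (x : R) : R :=
  match k with
  | O => atan x
  | S k' => (INR (2 * k' + 1) * Jf k' x - x * rho x ^ k' / (1 + x ^ 2)) / INR (S k')
  end.

Lemma onepx2 x : 0 < 1 + x ^ 2.
Proof. pose proof (pow2_ge_0 x). lra. Qed.

Lemma Jf_der k x : is_derive (Jf k) x (rho x ^ k / (1 + x ^ 2)).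
Proof.
  revert x. induction k; intros x.
  - change (Jf 0) with atan. rewrite pow_O. apply is_derive_Reals. replace (1 / (1 + x ^ 2)) with (/ (1 + x ^ 2)) by (field; pose proof (onepx2 x); lra). apply derivable_pt_lim_atan.
  - change (Jf (S k)) with (fun y => (INR (2 * k + 1) * Jf k y - y * rho y ^ k / (1 + y ^ 2)) / INR (S k)).
    unfold rho.
    auto_derive.
    + pose proof (onepx2 x). repeat split; try lra. exists (rho x ^ k / (1 + x ^ 2)). apply IHk.
    + replace (Derive (fun x0 => Jf k x0) x) with (rho x ^ k / (1 + x ^ 2)) by (symmetry; apply is_derive_unique; apply IHk).
      pose proof (onepx2 x) as Hx.
      unfold rho. replace (x * (x * 1)) with (x ^ 2) by ring. unfold Rdiv.
      set (A := 2 * x ^ 2 * / (1 + x ^ 2)).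
      destruct k as [|k'].
      * simpl. unfold A. field. lra.
      * simpl Init.Nat.pred. rewrite <- !tech_pow_Rmult. set (P := A ^ k').
        rewrite !S_INR. replace (S k' + (S k' + 0) + 1)%nat with (S (S (S (2 * k'))))%nat by lia.
        rewrite !S_INR, mult_INR. simpl (INR 2). unfold A. field.
        pose proof (pos_INR k'). split; lra.
Qed.

Lemma Jf_0 k : Jf k 0 = 0.
Proof.
  induction k. simpl. apply atan_0.
  cbn [Jf]. rewrite IHk. unfold Rdiv. ring.
Qed.

Lemma rho_1 : rho 1 = 1.
Proof. unfold rho. field. Qed.

Lemma Jf1_rec k : INR (S k) * Jf (S k) 1 = INR (2 * k + 1) * Jf k 1 - / 2.
Proof.
  cbn [Jf]. rewrite rho_1, pow1. assert (INR (S k) <> 0) by (apply not_0_INR; lia).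
  field. auto.
Qed.

Lemma delta_J k : delta k = Jf k 1.
Proof.
  induction k. rewrite delta_0. simpl. rewrite atan_1. auto.
  assert (H : INR (S k) <> 0) by (apply not_0_INR; lia).
  apply Rmult_eq_reg_l with (INR (S k)); auto.
  rewrite delta_rec, Jf1_rec, IHk. auto.
Qed.

Lemma rho_bounds x : 0 <= x <= 1 -> 0 <= rho x <= 1.
Proof.
  intros Hx. unfold rho. pose proof (onepx2 x). split.
  apply Rdiv_le_0_compat; [|lra]. pose proof (pow2_ge_0 x); lra.
  assert (x * x <= 1 * 1) by (apply Rmult_le_compat; lra).
  apply (Rmult_le_reg_r (1 + x ^ 2)); [lra|]. unfold Rdiv. rewrite Rmult_assoc, Rinv_l by lra. 
  replace (x ^ 2) with (x * x) by ring. lra.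
Qed.

Lemma Jf1_nonneg k : 0 <= Jf k 1.
Proof.
  destruct (MVT_cor2 (Jf k) (fun x => rho x ^ k / (1 + x ^ 2)) 0 1) as [c [Hc1 Hc2]].
  lra. intros c Hc. apply is_derive_Reals, Jf_der.
  rewrite Jf_0 in Hc1. rewrite Rminus_0_r in Hc1. rewrite Hc1.
  apply Rmult_le_pos; [|lra]. apply Rdiv_le_0_compat. apply pow_le. apply rho_bounds; lra.
  apply onepx2.
Qed.

Lemma Jf1_decr k : Jf (S k) 1 <= Jf k 1.
Proof.
  destruct (MVT_cor2 (fun x => Jf k x - Jf (S k) x)
     (fun x => rho x ^ k / (1 + x ^ 2) - rho x ^ S k / (1 + x ^ 2)) 0 1) as [c [Hc1 Hc2]].
  lra. intros c Hc. apply (derivable_pt_lim_minus (Jf k) (Jf (S k))); apply is_derive_Reals, Jf_der.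
  rewrite !Jf_0 in Hc1.
  assert (0 <= (rho c ^ k / (1 + c ^ 2) - rho c ^ S k / (1 + c ^ 2)) * (1 - 0)).
  { apply Rmult_le_pos; [|lra]. pose proof (onepx2 c). 
    assert (rho c ^ S k <= rho c ^ k).
    { simpl. pose proof (rho_bounds c ltac:(lra)). pose proof (pow_le (rho c) k ltac:(lra)). nra. }
    unfold Rdiv. rewrite <- Rmult_minus_distr_r. apply Rmult_le_pos. lra.
    apply Rlt_le, Rinv_0_lt_compat; lra. }
  lra.
Qed.

Lemma delta_nonneg k : 0 <= delta k.
Proof. rewrite delta_J. apply Jf1_nonneg. Qed.
Lemma delta_decr k : delta (S k) <= delta k.
Proof. rewrite !delta_J. apply Jf1_decr. Qed.
Lemma delta_le k : delta k <= PI / 4.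
Proof.
  induction k. rewrite delta_0; lra. pose proof (delta_decr k). lra.
Qed.
Lemma delta_tail k : INR k * delta (S k) <= / 2.
Proof.
  pose proof (delta_rec k) as H. pose proof (delta_decr k).
  rewrite S_INR in H. replace (2 * k + 1)%nat with (S (2 * k)) in H by lia.
  rewrite S_INR, mult_INR in H. simpl (INR 2) in H.
  pose proof (pos_INR k). nra.
Qed.


Lemma stirling2_gt n k : (n < k)%nat -> stirling2 n k = 0%nat.
Proof.
  revert k; induction n; intros k H; destruct k; simpl; try lia; auto.
  rewrite !IHn by lia. lia.
Qed.
Lemma stirling2_S0 n : stirling2 (S n) 0 = 0%nat.
Proof. reflexivity. Qed.
Lemma stirling2_nn n : stirling2 n n = 1%nat.
Proof. induction n; simpl; auto. rewrite IHn, stirling2_gt by lia. lia. Qed.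

Definition Rn (n : nat) (a : nat -> R) : R :=
  sum_n_m (fun k => a k * INR (fact k) * INR (stirling2 n k)) 0 n.

Definition Eop (a : nat -> R) (k : nat) : R := INR k * a k + INR (S k) * a (S k).
Definition Mop (a : nat -> R) (k : nat) : R := INR (S k) * a (S k) - INR k * a k.

Lemma Rn_S n a : Rn (S n) a = Rn n (Eop a).
Proof.
  unfold Rn, Eop. rewrite sumR_Sn_m by lia. rewrite stirling2_S0. simpl (INR 0).
  rewrite <- sumR_shift.
  set (f := fun k => INR k * a k * INR (fact k) * INR (stirling2 n k)).
  assert (H1 : @eq R (sum_n_m (fun k => a (S k) * INR (fact (S k)) * INR (stirling2 (S n) (S k))) 0 n)
     (sum_n_m (fun k => f (S k)) 0 n + sum_n_m (fun k => INR (S k) * a (S k) * INR (fact k) * INR (stirling2 n k)) 0 n)).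
  { rewrite <- sumR_plus. apply sumR_ext. intros k Hk. unfold f.
    change (stirling2 (S n) (S k)) with (S k * stirling2 n (S k) + stirling2 n k)%nat.
    rewrite plus_INR, mult_INR, fact_simpl, mult_INR. ring. }
  rewrite H1.
  assert (H2 : @eq R (sum_n_m (fun k => f (S k)) 0 n) (sum_n_m f 0 n)).
  { rewrite sumR_shift. rewrite sumR_n_Sm by lia. unfold f at 2. rewrite stirling2_gt by lia.
    rewrite (sumR_Sn_m f 0 n) by lia. unfold f at 2. simpl (INR 0). ring. }
  rewrite H2. unfold f. rewrite <- sumR_plus. 
  transitivity (sum_n_m (fun k : nat => (INR k * a k + INR (S k) * a (S k)) * INR (fact k) * INR (stirling2 n k)) 0 n).
  2: reflexivity. match goal with |- ?x + _ = _ => replace x with 0 by (simpl; ring) end. rewrite Rplus_0_l. apply sumR_ext. intros; ring.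
Qed.

Fixpoint iterL (L : (nat -> R) -> nat -> R) (n : nat) (a : nat -> R) : nat -> R :=
  match n with O => a | S n' => iterL L n' (L a) end.

Lemma Rn_0 a : Rn 0 a = a 0%nat.
Proof. unfold Rn. rewrite sumR_nn. simpl. ring. Qed.

Lemma Rn_scal n c a : Rn n (fun k => c * a k) = c * Rn n a.
Proof. unfold Rn. rewrite <- sumR_scal. apply sumR_ext; intros; ring. Qed.
Lemma Rn_plus n a b : Rn n (fun k => a k + b k) = Rn n a + Rn n b.
Proof. unfold Rn. rewrite <- sumR_plus. apply sumR_ext; intros; ring. Qed.
Lemma Rn_ext n a b : (forall k, a k = b k) -> Rn n a = Rn n b.
Proof. intros H. unfold Rn. apply sumR_ext; intros. rewrite H; auto. Qed.

Lemma Rn_iterE n a : Rn n a = iterL Eop n a 0%nat.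
Proof. revert a; induction n; intros a. apply Rn_0. rewrite Rn_S, IHn. reflexivity. Qed.

Lemma Rn_sign n a : Rn n (fun k => (-1) ^ k * a k) = (-1) ^ n * iterL Mop n a 0%nat.
Proof.
  revert a; induction n; intros a. rewrite Rn_0. simpl. ring.
  rewrite Rn_S. rewrite (Rn_ext _ _ (fun k => (-1) * ((-1) ^ k * Mop a k))).
  rewrite Rn_scal, IHn. simpl. ring.
  intros k. unfold Eop, Mop. simpl. ring.
Qed.

Definition linop (L : (nat -> R) -> nat -> R) :=
  forall x y a b k, L (fun j => x * a j + y * b j) k = x * L a k + y * L b k.

Lemma Mop_lin : linop Mop. Proof. intros x y a b k. unfold Mop. ring. Qed.
Lemma Eop_lin : linop Eop. Proof. intros x y a b k. unfold Eop. ring. Qed.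

Lemma iterL_lin L : linop L -> forall n, linop (iterL L n).
Proof.
  intros HL n. induction n; intros x y a b k. reflexivity.
  simpl. rewrite <- IHn. f_equal. apply functional_extensionality. intros j. apply HL.
Qed.

Lemma pascal_sum (x : nat -> R) n :
  @eq R (sum_n_m (fun j => INR (cb (S n) j) * x j) 0 (S n))
  (sum_n_m (fun j => INR (cb n j) * x (S j)) 0 n + sum_n_m (fun j => INR (cb n j) * x j) 0 n).
Proof.
  rewrite sumR_Sn_m by lia. rewrite <- sumR_shift.
  rewrite (sumR_ext (fun j => INR (cb (S n) (S j)) * x (S j))
                    (fun j => INR (cb n j) * x (S j) + INR (cb n (S j)) * x (S j))).
  2: { intros k Hk. simpl cb. rewrite plus_INR. ring. }
  rewrite sumR_plus.
  rewrite (sumR_shift (fun j => INR (cb n j) * x j)).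
  rewrite (sumR_Sn_m (fun j => INR (cb n j) * x j) 0 n) by lia.
  rewrite (sumR_n_Sm (fun j => INR (cb n j) * x j) 1 n) by lia.
  rewrite (cb_gt n (S n)) by lia. rewrite !cb_n0. simpl (INR 0). simpl (INR 1). ring.
Qed.

Lemma iter_binom L V : linop L ->
  (forall a, L (V a) = (fun k => V (L a) k + V a k)) ->
  (forall a, V a 0%nat = a 0%nat) ->
  forall n a, iterL L n (V a) 0%nat = sum_n_m (fun j => INR (cb n j) * iterL L j a 0%nat) 0 n.
Proof.
  intros HL HLV HV0 n. induction n; intros a.
  - simpl. rewrite sumR_nn. simpl. rewrite HV0. ring.
  - simpl iterL at 1. rewrite HLV.
    transitivity (iterL L n (fun k => 1 * V (L a) k + 1 * V a k) 0%nat).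
    { f_equal. apply functional_extensionality; intros; ring. }
    rewrite (iterL_lin L HL n). rewrite !Rmult_1_l. rewrite !IHn.
    rewrite pascal_sum. reflexivity.
Qed.


Definition Sop (a : nat -> R) (k : nat) : R := sum_n_m a 0 k.
Definition Uop (a : nat -> R) (k : nat) : R := a k + match k with O => 0 | S k' => a k' end.

Lemma Sop_Mop a k : Sop (Mop a) k = INR (S k) * a (S k).
Proof.
  unfold Sop, Mop. rewrite (sumR_telescope (fun i => INR i * a i)) by lia. simpl (INR 0). ring.
Qed.

Lemma MS a : Mop (Sop a) = (fun k => Sop (Mop a) k + Sop a k).
Proof.
  apply functional_extensionality. intros k. rewrite Sop_Mop. unfold Mop at 1. unfold Sop.
  rewrite sumR_n_Sm by lia. rewrite S_INR. ring.
Qed.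

Lemma EU a : Eop (Uop a) = (fun k => Uop (Eop a) k + Uop a k).
Proof.
  apply functional_extensionality. intros k. unfold Eop, Uop. destruct k.
  - simpl. ring.
  - rewrite !S_INR. ring.
Qed.

Lemma beta_id : beta = (fun k => 2 * Mop beta k + (-1) * Sop (Mop beta) k).
Proof.
  apply functional_extensionality. intros k. rewrite Sop_Mop. unfold Mop.
  pose proof (beta_rec k). replace (2 * k + 1)%nat with (S (2 * k)) in H by lia.
  rewrite !S_INR, mult_INR in H. simpl (INR 2) in H. rewrite !S_INR. lra.
Qed.

Fixpoint bt (k : nat) : R :=
  match k with
  | O => 1
  | S O => 1
  | S ((S k'') as k') => (bt k' + INR k'' * bt k'') / INR (S k')
  end.

Lemma bt_rec k : INR (S (S k)) * bt (S (S k)) = bt (S k) + INR k * bt k.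
Proof. cbn [bt]. assert (INR (S (S k)) <> 0) by (apply not_0_INR; lia). field. auto. Qed.

Lemma bt_id : bt = (fun k => 2 * Eop bt k + (-1) * Uop (Eop bt) k).
Proof.
  apply functional_extensionality. intros k. unfold Eop, Uop. destruct k.
  - simpl. ring.
  - pose proof (bt_rec k). rewrite !S_INR in *. lra.
Qed.

Definition qs n := iterL Mop n beta 0%nat.
Definition rs n := iterL Eop n bt 0%nat.

Lemma qs_rec n : qs n = 2 * qs (S n) - sum_n_m (fun j => INR (cb n j) * qs (S j)) 0 n.
Proof.
  unfold qs. rewrite beta_id at 1.
  rewrite (iterL_lin Mop Mop_lin n). 
  rewrite (iter_binom Mop Sop Mop_lin MS) by (intros; unfold Sop; apply sumR_nn).
  simpl. ring.
Qed.

Lemma rs_rec n : rs n = 2 * rs (S n) - sum_n_m (fun j => INR (cb n j) * rs (S j)) 0 n.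
Proof.
  unfold rs. rewrite bt_id at 1.
  rewrite (iterL_lin Eop Eop_lin n). 
  rewrite (iter_binom Eop Uop Eop_lin EU) by (intros; unfold Uop; ring).
  simpl. ring.
Qed.


Lemma rec_unique (x y : nat -> R) :
  (forall n, x n = 2 * x (S n) - sum_n_m (fun j => INR (cb n j) * x (S j)) 0 n) ->
  (forall n, y n = 2 * y (S n) - sum_n_m (fun j => INR (cb n j) * y (S j)) 0 n) ->
  x 0%nat = y 0%nat -> forall n, x n = y n.
Proof.
  intros Hx Hy H0.
  assert (step : forall (z : nat -> R), (forall n, z n = 2 * z (S n) - sum_n_m (fun j => INR (cb n j) * z (S j)) 0 n) ->
     z 1%nat = z 0%nat /\ forall m, z (S (S m)) = z (S m) + sum_n_m (fun j => INR (cb (S m) j) * z (S j)) 0 m).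
  { intros z Hz. split.
    - pose proof (Hz 0%nat). rewrite sumR_nn in H. simpl in H. lra.
    - intros m. pose proof (Hz (S m)). rewrite sumR_n_Sm in H by lia. rewrite cb_nn in H. simpl (INR 1) in H. lra. }
  destruct (step x Hx) as [x1 xS]. destruct (step y Hy) as [y1 yS].
  assert (forall n, forall j, (j <= n)%nat -> x j = y j).
  { induction n; intros j Hj.
    - assert (j = 0)%nat by lia. subst. auto.
    - destruct (Nat.eq_dec j (S n)); [|apply IHn; lia]. subst.
      destruct n. rewrite x1, y1. auto.
      rewrite xS, yS. rewrite (IHn (S n)) by lia. f_equal. apply sumR_ext. intros k Hk.
      rewrite IHn by lia. auto. }
  intros n. apply (H n n). lia.
Qed.

Lemma qs_rs n : qs n = rs n.
Proof.
  apply rec_unique. apply qs_rec. apply rs_rec. unfold qs, rs. simpl. rewrite beta_0. auto.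
Qed.

Lemma bt_struct m : bt (S (2 * m)) = bt (2 * m) /\
   bt (S (S (2 * m))) = bt (2 * m) * INR (2 * m + 1) / INR (2 * m + 2) /\
   0 < bt (2 * m) /\ / INR (4 * m + 1) <= bt (2 * m) ^ 2.
Proof.
  induction m as [|m [H1 [H2 [H3 H4]]]].
  - simpl. split. auto. split. field. split. lra. lra.
  - assert (E1 : bt (S (2 * S m)) = bt (2 * S m)).
    { replace (2 * S m)%nat with (S (S (2 * m))) by lia.
      pose proof (bt_rec (S (2 * m))) as R1. pose proof (bt_rec (2 * m)) as R0.
      rewrite H1 in R0. rewrite H2, H1 in R1. 
      assert (INR (S (S (S (2 * m)))) <> 0) by (apply not_0_INR; lia).
      apply Rmult_eq_reg_l with (INR (S (S (S (2 * m))))); auto. rewrite R1. rewrite H2.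
      replace (2 * m + 1)%nat with (S (2 * m)) by lia. replace (2 * m + 2)%nat with (S (S (2 * m))) by lia.
      rewrite !S_INR. rewrite !S_INR in H. pose proof (pos_INR (2 * m)). field. lra. }
    assert (E2 : bt (S (S (2 * S m))) = bt (2 * S m) * INR (2 * S m + 1) / INR (2 * S m + 2)).
    { pose proof (bt_rec (2 * S m)) as R. rewrite E1 in R.
      replace (2 * S m + 2)%nat with (S (S (2 * S m))) by lia.
      replace (2 * S m + 1)%nat with (S (2 * S m)) by lia.
      assert (INR (S (S (2 * S m))) <> 0) by (apply not_0_INR; lia).
      apply Rmult_eq_reg_l with (INR (S (S (2 * S m)))); auto. rewrite R.
      rewrite !S_INR. rewrite !S_INR in H. pose proof (pos_INR (2 * S m)). field. lra. }
    assert (E3 : bt (2 * S m) = bt (2 * m) * INR (2 * m + 1) / INR (2 * m + 2)).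
    { replace (2 * S m)%nat with (S (S (2 * m))) by lia. auto. }
    split; auto. split; auto.
    rewrite E3. rewrite !plus_INR, !mult_INR.
    replace (INR 1) with 1 by (simpl; ring). replace (INR 2) with 2 by (simpl; ring). replace (INR 4) with 4 by (simpl; ring).
    pose proof (pos_INR m). rewrite S_INR.
    split.
    + apply Rdiv_lt_0_compat; [apply Rmult_lt_0_compat|]; lra.
    + rewrite plus_INR, mult_INR in H4. replace (INR 4) with 4 in H4 by (simpl; ring). replace (INR 1) with 1 in H4 by (simpl; ring).
      set (t := INR m) in *. set (B := bt (2 * m)) in *.
      set (X := (2 * t + 1) ^ 2 / (2 * t + 2) ^ 2).
      replace ((B * (2 * t + 1) / (2 * t + 2)) ^ 2) with (B ^ 2 * X) by (unfold X; field; lra).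
      idtac.
      assert (HX : 0 <= X) by (unfold X; apply Rdiv_le_0_compat; [apply pow2_ge_0 | apply pow_lt; lra]).
      assert (E : / (4 * t + 1) * X - / (4 * (t + 1) + 1) = / ((4 * t + 1) * (4 * t + 5) * (2 * t + 2) ^ 2))
        by (unfold X; field; repeat split; lra).
      assert (0 < / ((4 * t + 1) * (4 * t + 5) * (2 * t + 2) ^ 2)).
      { apply Rinv_0_lt_compat. apply Rmult_lt_0_compat. apply Rmult_lt_0_compat; lra. apply pow_lt; lra. }
      assert (/ (4 * t + 1) * X <= B ^ 2 * X) by (apply Rmult_le_compat_r; auto).
      lra.
Qed.


Lemma bt_facts k : 0 < bt k /\ / INR (2 * k + 1) <= bt k ^ 2.
Proof.
  destruct (Nat.Even_or_Odd k) as [[m Hm]|[m Hm]]; subst.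
  - destruct (bt_struct m) as [_ [_ [H3 H4]]]. split; auto.
    replace (2 * (2 * m) + 1)%nat with (4 * m + 1)%nat by lia. auto.
  - destruct (bt_struct m) as [H1 [_ [H3 H4]]]. replace (2 * m + 1)%nat with (S (2 * m)) by lia.
    rewrite H1. split; auto. eapply Rle_trans; [|exact H4].
    apply Rinv_le_contravar. apply lt_0_INR; lia. apply le_INR; lia.
Qed.

Lemma rs_Rn n : rs n = Rn n bt.
Proof. unfold rs. rewrite Rn_iterE. auto. Qed.

Lemma Rn_nonneg n a : (forall k, 0 <= a k) -> 0 <= Rn n a.
Proof.
  intros H. unfold Rn. apply sumR_nonneg. intros k _. apply Rmult_le_pos. apply Rmult_le_pos. auto.
  apply pos_INR. apply pos_INR.
Qed.

Lemma b_eq n : b_seq n = Rn n bt / (4 * INR (fact n)).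
Proof.
  unfold b_seq. rewrite <- rs_Rn, <- qs_rs. unfold qs.
  rewrite (sumR_ext _ (fun k => (-1) ^ k * beta k * INR (fact k) * INR (stirling2 n k))).
  2: { intros k _. unfold beta. pose proof (INR_fact_neq_0 k). field. auto. }
  change (sum_n_m (fun k => (-1) ^ k * beta k * INR (fact k) * INR (stirling2 n k)) 0 n)
    with (Rn n (fun k => (-1) ^ k * beta k)).
  rewrite Rn_sign. pose proof (INR_fact_neq_0 n).
  transitivity (/ 4 * ((-1) ^ n * (-1) ^ n) / INR (fact n) * iterL Mop n beta 0%nat).
  - unfold Rdiv. ring.
  - rewrite <- Rpow_mult_distr. replace ((-1) * (-1)) with 1 by ring. rewrite pow1. field. auto.
Qed.

Lemma b_sign n : b_seq n = / 4 * ((-1) ^ n / INR (fact n)) * Rn n (fun k => (-1) ^ k * beta k).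
Proof.
  unfold b_seq, Rn. f_equal. apply sumR_ext. intros k _. unfold beta.
  pose proof (INR_fact_neq_0 k). field. auto.
Qed.

Lemma inner_G k :
  sum_n_m (fun l => (-1) ^ l * Binomial.C (2 * k - l) k * Rpower 2 (INR l / 2) / INR l
        * sin (3 * INR l * PI / 4)) 1 k = Gk k.
Proof.
  unfold Gk. apply sumR_ext. intros l _. rewrite <- (proj2 (trig_csl l)). unfold Rdiv. ring.
Qed.

Lemma c_sign n : c_seq n = (-1) ^ (S n) / INR (fact n) * Rn n (fun k => (-1) ^ k * gam k).
Proof.
  unfold c_seq. f_equal. unfold Rn.
  rewrite (sumR_Sn_m _ 0 n) by lia. unfold gam at 1. rewrite Gk_0.
  replace (0 / 2 ^ 0) with 0 by (simpl; field). 
  match goal with |- _ = ?x + _ => replace x with 0 by ring end. rewrite Rplus_0_l.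
  apply sumR_ext. intros k _. rewrite inner_G. unfold gam.
  assert (2 ^ k <> 0) by (apply pow_nonzero; lra). field. auto.
Qed.

Lemma d_eq n : PI * b_seq n - c_seq n = (-1) ^ n / INR (fact n) * Rn n (fun k => (-1) ^ k * delta k).
Proof.
  rewrite b_sign, c_sign.
  assert (Hc : Rn n (fun k => (-1) ^ k * delta k) = PI / 4 * Rn n (fun k => (-1) ^ k * beta k) + Rn n (fun k => (-1) ^ k * gam k)).
  { rewrite <- Rn_scal, <- Rn_plus. apply Rn_ext. intros k. unfold delta. ring. }
  rewrite Hc. simpl pow. unfold Rdiv. ring.
Qed.

Lemma d_bound n : Rabs (PI * b_seq n - c_seq n) <= Rn n delta / INR (fact n).
Proof.
  rewrite d_eq. rewrite Rabs_mult. unfold Rdiv. rewrite Rabs_mult, pow_1_abs.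
  rewrite Rabs_inv. rewrite (Rabs_right (INR (fact n))) by (apply Rle_ge, pos_INR).
  rewrite Rmult_1_l. rewrite Rmult_comm. apply Rmult_le_compat_r.
  apply Rlt_le, Rinv_0_lt_compat, lt_0_INR, lt_O_fact.
  unfold Rn. eapply Rle_trans. apply sumR_abs. apply sumR_le. intros k _.
  rewrite !Rabs_mult, pow_1_abs, Rabs_right by (apply Rle_ge, delta_nonneg).
  rewrite !Rabs_right by (apply Rle_ge, pos_INR). lra.
Qed.


Lemma qs_step m : qs (S (S m)) = qs (S m) + sum_n_m (fun j => INR (cb (S m) j) * qs (S j)) 0 m.
Proof.
  pose proof (qs_rec (S m)) as H. rewrite sumR_n_Sm in H by lia. rewrite cb_nn in H. simpl (INR 1) in H. lra.
Qed.
Lemma qs_1 : qs 1 = qs 0.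
Proof. pose proof (qs_rec 0) as H. rewrite sumR_nn in H. simpl in H. lra. Qed.
Lemma qs_0 : qs 0 = 1.
Proof. unfold qs. simpl. apply beta_0. Qed.
Lemma qs_nonneg n : 0 <= qs n.
Proof. rewrite qs_rs, rs_Rn. apply Rn_nonneg. intros k. apply Rlt_le, bt_facts. Qed.

Lemma sum_ge_last (f : nat -> R) m : (forall k, 0 <= f k) -> f m <= sum_n_m f 0 m.
Proof.
  intros H. destruct m. rewrite sumR_nn. lra.
  rewrite sumR_n_Sm by lia. pose proof (sumR_nonneg f 0 m ltac:(intros; auto)). lra.
Qed.

Lemma cb_S_n m : INR (cb (S m) m) = INR (S m).
Proof.
  rewrite <- C_cb by lia. unfold Binomial.C. replace (S m - m)%nat with 1%nat by lia.
  rewrite fact_simpl, mult_INR. simpl (fact 1). pose proof (INR_fact_neq_0 m).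
  replace (INR 1) with 1 by (simpl; ring). set (F := INR (fact m)) in *. rewrite S_INR. field. auto.
Qed.
Lemma cb_SS_n p : INR (cb (S (S p)) p) = INR (S (S p)) * INR (S p) / 2.
Proof.
  rewrite <- C_cb by lia. unfold Binomial.C. replace (S (S p) - p)%nat with 2%nat by lia.
  rewrite !fact_simpl, !mult_INR. simpl (fact 2). pose proof (INR_fact_neq_0 p).
  replace (INR 2) with 2 by (simpl; ring). set (F := INR (fact p)) in *. rewrite !S_INR. change (INR (fact 0)) with 1. change (INR 0) with 0. field. auto.
Qed.

Lemma fact_pos n : 0 < INR (fact n).
Proof. apply lt_0_INR, lt_O_fact. Qed.

Lemma b_qs n : b_seq n = qs n / (4 * INR (fact n)).
Proof. rewrite b_eq, qs_rs, rs_Rn. auto. Qed.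

Lemma b_mono n : b_seq n <= b_seq (S n).
Proof.
  rewrite !b_qs. pose proof (fact_pos n). destruct n.
  - rewrite qs_1. simpl. lra.
  - rewrite qs_step. 
    assert (INR (S n) * qs (S n) <= sum_n_m (fun j => INR (cb (S n) j) * qs (S j)) 0 n).
    { rewrite <- cb_S_n. apply (sum_ge_last (fun j => INR (cb (S n) j) * qs (S j))).
      intros k. apply Rmult_le_pos. apply pos_INR. apply qs_nonneg. }
    rewrite (fact_simpl (S n)), mult_INR.
    pose proof (qs_nonneg (S n)).
    apply (Rmult_le_reg_r (4 * (INR (S (S n)) * INR (fact (S n))))).
    { apply Rmult_lt_0_compat. lra. apply Rmult_lt_0_compat. apply lt_0_INR; lia. auto. }
    field_simplify; try (split; try lra; apply not_0_INR; lia).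
    rewrite !S_INR in *. nra. lra.
Qed.

Lemma b_0 : b_seq 0 = / 4.
Proof. rewrite b_qs, qs_0. simpl. field. Qed.
Lemma b_ge n : / 4 <= b_seq n.
Proof. induction n. rewrite b_0; lra. pose proof (b_mono n). lra. Qed.

Lemma b_step p : b_seq (S (S p)) + / 24 <= b_seq (S (S (S p))).
Proof.
  pose proof (b_ge (S p)) as Hb1. rewrite b_qs in Hb1. rewrite (fact_simpl p), mult_INR in Hb1.
  rewrite !b_qs. rewrite (qs_step (S p)).
  rewrite (sumR_n_Sm _ 0 p) by lia.
  pose proof (sum_ge_last (fun j => INR (cb (S (S p)) j) * qs (S j)) p ltac:(intros; apply Rmult_le_pos; [apply pos_INR|apply qs_nonneg])) as Hs.
  cbv beta in Hs. rewrite cb_SS_n in Hs. rewrite cb_S_n.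
  rewrite (fact_simpl (S (S p))). rewrite (fact_simpl (S p)). rewrite (fact_simpl p). rewrite !mult_INR.
  pose proof (fact_pos p) as Hf. set (f := INR (fact p)) in *.
  pose proof (qs_nonneg (S (S p))). pose proof (qs_nonneg (S p)).
  set (x1 := qs (S p)) in *. set (x2 := qs (S (S p))) in *.
  set (Sm := sum_n_m (fun j : nat => INR (cb (S (S p)) j) * qs (S j)) 0 p) in *.
  rewrite !S_INR in *. pose proof (pos_INR p). set (t := INR p) in *.
  assert (Hx1 : (t + 1) * f <= x1).
  { apply (Rmult_le_compat_r (4 * ((t + 1) * f))) in Hb1; [|nra].
    replace (x1 / (4 * ((t + 1) * f)) * (4 * ((t + 1) * f))) with x1 in Hb1 by (field; repeat split; lra). nra. }
  assert (P1 : 0 < (t + 1) * f) by (apply Rmult_lt_0_compat; lra).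
  assert (P2 : 0 < (t + 1 + 1) * ((t + 1) * f)) by (apply Rmult_lt_0_compat; lra).
  assert (P3 : 0 < (t + 1 + 1 + 1) * ((t + 1 + 1) * ((t + 1) * f))) by (apply Rmult_lt_0_compat; lra).
  apply (Rmult_le_reg_r (24 * ((t + 1 + 1 + 1) * ((t + 1 + 1) * ((t + 1) * f))))). lra.
  replace ((x2 / (4 * ((t + 1 + 1) * ((t + 1) * f))) + / 24) * (24 * ((t + 1 + 1 + 1) * ((t + 1 + 1) * ((t + 1) * f)))))
    with (6 * (t + 1 + 1 + 1) * x2 + (t + 1 + 1 + 1) * ((t + 1 + 1) * ((t + 1) * f))) by (field; repeat split; lra).
  replace ((x2 + (Sm + (t + 1 + 1) * x2)) / (4 * ((t + 1 + 1 + 1) * ((t + 1 + 1) * ((t + 1) * f)))) *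
    (24 * ((t + 1 + 1 + 1) * ((t + 1 + 1) * ((t + 1) * f))))) with (6 * (x2 + (Sm + (t + 1 + 1) * x2))) by (field; repeat split; lra).
  assert (A1 : (t + 1 + 1) * (t + 1) * ((t + 1) * f) <= (t + 1 + 1) * (t + 1) * x1).
  { apply Rmult_le_compat_l; auto. nra. }
  assert (A2 : (t + 1 + 1 + 1) * ((t + 1 + 1) * ((t + 1) * f)) <= 3 * ((t + 1 + 1) * (t + 1) * ((t + 1) * f))).
  { replace ((t + 1 + 1 + 1) * ((t + 1 + 1) * ((t + 1) * f))) with ((t + 1 + 1 + 1) * ((t + 1 + 1) * (t + 1) * f)) by ring.
    replace (3 * ((t + 1 + 1) * (t + 1) * ((t + 1) * f))) with ((3 * (t + 1)) * ((t + 1 + 1) * (t + 1) * f)) by ring.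
    apply Rmult_le_compat_r. apply Rlt_le. apply Rmult_lt_0_compat; [nra|lra]. lra. }
  lra.
Qed.


Lemma b_lin p : / 4 + INR p / 24 <= b_seq (S (S p)).
Proof.
  induction p. simpl. pose proof (b_ge 2). lra.
  pose proof (b_step p). rewrite S_INR. lra.
Qed.

Lemma exists_nat_gt r : exists N : nat, r < INR N.
Proof.
  destruct (archimed r) as [H _]. exists (Z.to_nat (up r)).
  destruct (ZArith_dec.Z_le_gt_dec 0 (up r)).
  - rewrite INR_IZR_INZ, Z2Nat.id. lra. lia.
  - assert (Hz : Z.to_nat (up r) = 0%nat) by (destruct (up r); try lia; reflexivity). rewrite Hz. simpl. assert (IZR (up r) <= -1) by (apply IZR_le; lia). lra.
Qed.

Lemma b_lim : is_lim_seq b_seq p_infty.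
Proof.
  apply is_lim_seq_spec. intros M. destruct (exists_nat_gt (24 * M)) as [N HN].
  exists (S (S N)). intros n Hn. destruct n as [|[|p]]; try lia.
  pose proof (b_lin p). assert (INR N <= INR p) by (apply le_INR; lia). lra.
Qed.

Lemma stirling_bound n k : INR (stirling2 n k) <= INR (S k) ^ n.
Proof.
  revert k; induction n; intros k.
  - destruct k; simpl; lra.
  - destruct k. change (stirling2 (S n) 0) with 0%nat. change (INR 0) with 0. apply pow_le. simpl; lra.
    change (stirling2 (S n) (S k)) with (S k * stirling2 n (S k) + stirling2 n k)%nat.
    rewrite plus_INR, mult_INR. pose proof (IHn (S k)). pose proof (IHn k).
    assert (INR (S k) ^ n <= INR (S (S k)) ^ n) by (apply pow_incr; split; [apply pos_INR | apply le_INR; lia]).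
    rewrite <- tech_pow_Rmult.
    set (a := INR (S (S k)) ^ n) in *. set (b := INR (S k) ^ n) in *.
    assert (INR (S k) * INR (stirling2 n (S k)) <= INR (S k) * a) by (apply Rmult_le_compat_l; [apply pos_INR|auto]).
    rewrite (S_INR (S k)). lra.
Qed.

Lemma delta_small eps : 0 < eps -> exists K, forall k, (K <= k)%nat -> delta k <= eps * bt k.
Proof.
  intros He. destruct (exists_nat_gt (/ (eps * eps))) as [N HN].
  exists (S (N + 3)). intros k Hk. destruct k as [|j]; [lia|].
  pose proof (delta_tail j) as Ht. pose proof (delta_nonneg (S j)) as Hd.
  destruct (bt_facts (S j)) as [Hb Hb2].
  assert (Hj : INR N + 3 <= INR j) by (replace 3 with (INR 3) by (simpl; ring); rewrite <- plus_INR; apply le_INR; lia).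
  assert (HN0 : 0 <= INR N) by apply pos_INR.
  assert (Hee : 1 < eps * eps * INR N).
  { apply (Rmult_lt_compat_l (eps * eps)) in HN; [|nra]. rewrite Rinv_r in HN by nra. lra. }
  replace (2 * S j + 1)%nat with (S (S (S (2 * j)))) in Hb2 by lia.
  rewrite !S_INR, mult_INR in Hb2. replace (INR 2) with 2 in Hb2 by (simpl; ring).
  set (t := INR j) in *. set (d := delta (S j)) in *. set (b := bt (S j)) in *.
  assert (Hb3 : 1 <= b ^ 2 * (2 * t + 1 + 1 + 1)).
  { apply (Rmult_le_compat_r (2 * t + 1 + 1 + 1)) in Hb2; [|lra]. rewrite Rinv_l in Hb2 by lra. lra. }
  assert (Htd : 0 <= t * d) by (apply Rmult_le_pos; lra).
  assert (Hd2 : d * d * (4 * t * t) <= 1).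
  { assert ((t * d) * (t * d) <= / 2 * / 2) by (apply Rmult_le_compat; lra).
    replace (d * d * (4 * t * t)) with (4 * ((t * d) * (t * d))) by ring. lra. }
  assert (Hk2 : 2 * t + 3 <= 4 * eps * eps * t * t) by nra.
  assert (d * d <= eps * eps * (b * b)).
  { assert (d * d * (4 * t * t) <= eps * eps * (b * b) * (4 * t * t)).
    { eapply Rle_trans. exact Hd2. simpl in Hb3. nra. }
    apply Rmult_le_reg_r with (4 * t * t). nra. auto. }
  apply Rsqr_incr_0_var. unfold Rsqr. replace (eps * b * (eps * b)) with (eps * eps * (b * b)) by ring. auto. apply Rlt_le, Rmult_lt_0_compat; lra.
Qed.


Lemma Rn_split eps K n : (1 <= K <= n)%nat -> 0 <= eps ->
  (forall k, (K <= k)%nat -> delta k <= eps * bt k) ->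
  Rn n delta <= INR K * (PI / 4 * (INR (fact K) * INR K ^ n)) + eps * Rn n bt.
Proof.
  intros HK He Hd. unfold Rn.
  rewrite (sumR_chasles _ 0 (pred K) n) by lia.
  apply Rplus_le_compat.
  - eapply Rle_trans. apply sumR_const_le with (c := PI / 4 * (INR (fact K) * INR K ^ n)).
    + intros k Hk. rewrite Rmult_assoc. apply Rmult_le_compat.
      apply delta_nonneg. apply Rmult_le_pos; apply pos_INR. apply delta_le.
      apply Rmult_le_compat. apply pos_INR. apply pos_INR. apply le_INR, fact_le; lia.
      eapply Rle_trans. apply stirling_bound. apply pow_incr. split. apply pos_INR. apply le_INR; lia.
    + replace (S (pred K) - 0)%nat with K by lia. lra.
  - rewrite <- sumR_scal.
    apply Rle_trans with (sum_n_m (fun k => eps * (bt k * INR (fact k) * INR (stirling2 n k))) 0 n).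
    + rewrite (sumR_chasles (fun k => eps * (bt k * INR (fact k) * INR (stirling2 n k))) 0 (pred K) n) by lia.
      assert (0 <= sum_n_m (fun k => eps * (bt k * INR (fact k) * INR (stirling2 n k))) 0 (pred K)).
      { apply sumR_nonneg. intros k _. apply Rmult_le_pos; auto. apply Rmult_le_pos. apply Rmult_le_pos.
        apply Rlt_le, bt_facts. apply pos_INR. apply pos_INR. }
      match goal with |- _ <= ?a + ?b => assert (sum_n_m (fun k => delta k * INR (fact k) * INR (stirling2 n k)) (S (pred K)) n <= b) end.
      { apply sumR_le. intros k Hk. rewrite <- !Rmult_assoc. apply Rmult_le_compat_r. apply pos_INR.
        apply Rmult_le_compat_r. apply pos_INR. apply Hd. lia. }
      lra.
    + lra.
Qed.

Lemma ratio_lim : is_lim_seq (fun n => c_seq n / b_seq n) PI.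
Proof.
  apply is_lim_seq_spec. intros eps. simpl.
  pose proof (cond_pos eps) as Heps.
  set (e := eps / 5). assert (He : 0 < e) by (unfold e; lra).
  destruct (delta_small e He) as [K0 HK0].
  set (K := S K0). assert (HK : forall k, (K <= k)%nat -> delta k <= e * bt k) by (intros; apply HK0; unfold K in *; lia).
  set (C := PI * INR K * INR (fact K)).
  assert (HC : 0 < C).
  { unfold C. apply Rmult_lt_0_compat. apply Rmult_lt_0_compat. apply PI_RGT_0. apply lt_0_INR; unfold K; lia. apply fact_pos. }
  destruct (cv_speed_pow_fact (INR K) (e / (C + 1))) as [N HN].
  { apply Rdiv_lt_0_compat; lra. }
  exists (max N K). intros n Hn.
  specialize (HN n ltac:(lia)). unfold R_dist in HN. rewrite Rminus_0_r in HN.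
  assert (Hpos : 0 <= INR K ^ n / INR (fact n)).
  { apply Rdiv_le_0_compat. apply pow_le, pos_INR. apply fact_pos. }
  rewrite Rabs_right in HN by lra.
  pose proof (b_ge n) as Hb.
  pose proof (d_bound n) as Hd.
  pose proof (Rn_split e K n ltac:(unfold K in *; lia) ltac:(lra) HK) as Hs.
  pose proof (b_eq n) as Hbe.
  pose proof (fact_pos n) as Hf.
  assert (HRb : Rn n bt = 4 * INR (fact n) * b_seq n).
  { rewrite Hbe. field. lra. }
  rewrite HRb in Hs.
  assert (Hd2 : Rabs (PI * b_seq n - c_seq n) <= C / 4 * (INR K ^ n / INR (fact n)) + 4 * e * b_seq n).
  { eapply Rle_trans. exact Hd. apply (Rmult_le_reg_r (INR (fact n))). auto.
    replace (Rn n delta / INR (fact n) * INR (fact n)) with (Rn n delta) by (field; lra).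
    eapply Rle_trans. exact Hs. unfold C. right. field. lra. }
  replace (c_seq n / b_seq n - PI) with (- ((PI * b_seq n - c_seq n) / b_seq n)) by (field; lra).
  rewrite Rabs_Ropp. unfold Rdiv at 1. rewrite Rabs_mult, Rabs_inv, (Rabs_right (b_seq n)) by lra.
  apply (Rmult_lt_reg_r (b_seq n)). lra.
  rewrite Rmult_assoc, Rinv_l, Rmult_1_r by lra.
  eapply Rle_lt_trans. exact Hd2.
  assert (C * (INR K ^ n / INR (fact n)) < e).
  { apply Rlt_le_trans with (C * (e / (C + 1))). apply Rmult_lt_compat_l; auto.
    apply (Rmult_le_reg_r (C + 1)). lra. replace (C * (e / (C + 1)) * (C + 1)) with (C * e) by (field; lra). nra. }
  assert (0 <= C * (INR K ^ n / INR (fact n))) by (apply Rmult_le_pos; lra).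
  assert (C / 4 * (INR K ^ n / INR (fact n)) <= C * (INR K ^ n / INR (fact n)) * b_seq n) by nra.
  unfold e in *. nra.
Qed.

Theorem theorem6p3 :
  is_lim_seq b_seq p_infty /\
  is_lim_seq (fun n => c_seq n / b_seq n) PI /\
  is_lim_seq c_seq p_infty.
Proof.
  split; [apply b_lim|]. split; [apply ratio_lim|].
  apply is_lim_seq_ext with (fun n => b_seq n * (c_seq n / b_seq n)).
  { intros n. pose proof (b_ge n). field. lra. }
  eapply is_lim_seq_mult. apply b_lim. apply ratio_lim.
  apply is_Rbar_mult_p_infty_pos. apply PI_RGT_0.
Qed.
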